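(* For every $d\ge1$ and every $1\le i\le d$, $H_{i,d}>0$.
   Context: For integers $i,d\ge -1$ define $f_{-1,-1}=1$, $f_{-1,d}=0$ for $d\ge0$, $f_{i,-1}=0$ for $i\ge0$, and $f_{i,d}=(i+1)!\,S(d+1,i+1)$ for $i,d\ge0$, where $S(\cdot,\cdot)$ is the Stirling number of the second kind. For $d\ge0$ define rational numbers $F_{i,d}$, $-1\le i\le d$, by $F_{d,d}=1$ and recursively for $-1\le i\le d-1$, $F_{i,d}=\frac{1}{(d+1)!-(i+1)!}\sum_{j=i+1}^{d}f_{i,j}F_{j,d}$. Let $F_d(z)=\sum_{i=-1}^dF_{i,d}z^{d-i}$, and define the $H$-polynomial $H_d(z)=F_d(z-1)=\sum_{i=0}^{d+1}H_{i,d}z^{d+1-i}$, which defines the numbers $H_{i,d}$. *)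

(* Defs.v *)
(* Paper indices i,d >= -1 are shifted by one: a = i+1, b = d+1. *)
From HB Require Import structures.
From mathcomp Require Import all_boot all_order all_algebra.
Set Implicit Arguments. Unset Strict Implicit. Unset Printing Implicit Defensive.
Import Order.TTheory GRing.Theory Num.Theory.
Local Open Scope ring_scope.

Fixpoint stirling2 (n k : nat) : nat :=
  match n, k with
  | 0, 0 => 1
  | 0, _.+1 => 0
  | _.+1, 0 => 0
  | n'.+1, k'.+1 => (k'.+1 * stirling2 n' k'.+1 + stirling2 n' k')%N
  end.

(* fsh a b = f_{a-1,b-1} of the paper. *)
Definition fsh (a b : nat) : rat :=
  match a, b with
  | 0, 0 => 1
  | 0, _.+1 => 0
  | _.+1, 0 => 0
  | a'.+1, b'.+1 => ((a'.+1)`! * stirling2 b'.+1 a'.+1)%:R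
  end.

(* Ftail d n = [:: F_{d-n-1,d}; ...; F_{d,d}] (paper indices), built by the
   downward recursion F_{i,d} = ((d+1)! - (i+1)!)^-1 * sum_{j=i+1}^d f_{i,j} F_{j,d}. *)
Fixpoint Ftail (d n : nat) : seq rat :=
  match n with
  | 0 => [:: 1]
  | n'.+1 =>
      let s := Ftail d n' in
      let a := (d.+1 - n)%N in
      (((d.+1)`!)%:R - (a`!)%:R)^-1 *
        (\sum_(k < size s) fsh a (a + k.+1) * s`_k) :: s
  end.

(* Fsh d a = F_{a-1,d}, for 0 <= a <= d+1. *)
Definition Fsh (d a : nat) : rat := nth 0 (Ftail d d.+1) a.

Definition Fpoly (d : nat) : {poly rat} :=
  \sum_(a < d.+2) Fsh d a *: 'X^(d.+1 - a).

Definition Hpoly (d : nat) : {poly rat} := Fpoly d \Po ('X - 1).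

Definition Hcoef (i d : nat) : rat := (Hpoly d)`_(d.+1 - i).

(* Main.v *)
Require Import Defs.
From HB Require Import structures.
From mathcomp Require Import all_boot all_order all_algebra.
From mathcomp Require Import ring lra zify.
Import Order.TTheory GRing.Theory Num.Theory.
Set Implicit Arguments. Unset Strict Implicit. Unset Printing Implicit Defensive.
Local Open Scope ring_scope.

Local Close Scope ring_scope.

Definition oo (n a : nat) : nat := (a`! * stirling2 n a)%N.

Lemma oo00 : oo 0 0 = 1%N. Proof. by []. Qed.
Lemma ooS0 n : oo n.+1 0 = 0%N. Proof. by rewrite /oo /= muln0. Qed.
Lemma oo0S a : oo 0 a.+1 = 0%N. Proof. by rewrite /oo /= muln0. Qed.
Lemma ooSS n a : oo n.+1 a.+1 = (a.+1 * (oo n a.+1 + oo n a))%N.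
Proof. rewrite /oo /= factS. ring. Qed.

Lemma stirling2_lt n a : (n < a)%N -> stirling2 n a = 0%N.
Proof.
elim: n a => [|n IH] [|a] //= H.
rewrite (IH a.+1) ?(IH a) ?muln0 //; exact: ltnW.
Qed.

Lemma oo_lt n a : (n < a)%N -> oo n a = 0%N.
Proof. by move=> H; rewrite /oo stirling2_lt ?muln0. Qed.

Lemma stirling2_nn n : stirling2 n n = 1%N.
Proof. elim: n => [|n IH] //=; by rewrite IH stirling2_lt ?muln0. Qed.

Lemma oo_nn n : oo n n = n`!.
Proof. by rewrite /oo stirling2_nn muln1. Qed.

Lemma oo_sum n a : oo n a.+1 = (\sum_(j < n) 'C(n, j) * oo j a)%N.
Proof.
elim: n a => [|n IH] a; first by rewrite big_ord0 oo0S.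
rewrite big_ord_recl /= bin0 mul1n.
under eq_bigr => j _ do rewrite /bump /= add1n binS mulnDl.
rewrite big_split /=.
have E2 : (\sum_(i < n) 'C(n, i) * oo i.+1 a = a * (oo n a.+1 + oo n a))%N.
  case: a => [|a].
    rewrite mul0n big1 // => i _; by rewrite ooS0 muln0.
  rewrite (IH a.+1) (IH a) -big_split big_distrr /=.
  by apply: eq_bigr => i _; rewrite ooSS; ring.
have E1 : (oo 0 a + \sum_(i < n) 'C(n, i.+1) * oo i.+1 a = oo n a.+1 + oo n a)%N.
  have := big_ord_recl n (fun j : 'I_n.+1 => 'C(n, j) * oo j a)%N.
  rewrite /= bin0 mul1n => <-.
  rewrite big_ord_recr /= binn mul1n -IH //.
rewrite addnA E1 E2 ooSS; ring.
Qed.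

Local Open Scope ring_scope.

Definition Ep (n : nat) : {poly rat} := \poly_(t < n.+1) ((oo n (n - t))%:R).

Lemma coefE n t : (Ep n)`_t = if (t <= n)%N then (oo n (n - t))%:R else 0.
Proof. by rewrite coef_poly ltnS. Qed.

Lemma PE n : (0 < n)%N ->
  'X * Ep n = \sum_(j < n) ('C(n, j))%:R *: ('X^(n - j) * Ep j).
Proof.
move=> n0; apply/polyP => t; rewrite coefXM coef_sum.
case: t => [|s] /=.
  rewrite big1 // => j _; rewrite coefZ coefXnM.
  by rewrite subn_gt0 ltn_ord mulr0.
rewrite coefE.
case: (ltnP s n) => sn.
  rewrite ltnW // (_ : (n - s = (n - s.+1).+1)%N); last lia.
  rewrite oo_sum natr_sum; apply: eq_bigr => j _.
  rewrite coefZ coefXnM natrM coefE.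
  case: ltnP => h1.
    by rewrite oo_lt ?mulr0 //; lia.
  have h2 : (s.+1 - (n - j) <= j)%N by lia.
  rewrite h2; congr (_ * (oo _ _)%:R); have := ltn_ord j; lia.
rewrite big1.
  case: ifP => // h; have -> : s = n by apply/eqP; rewrite eqn_leq h sn.
  by rewrite subnn; case: n n0 {sn h}.
move=> j _; rewrite coefZ coefXnM coefE.
case: ltnP => h1; first by rewrite mulr0.
have -> : (s.+1 - (n - j) <= j)%N = false.
  apply/negbTE; rewrite -ltnNge; have := ltn_ord j; lia.
by rewrite mulr0.
Qed.

Definition Phi (n : nat) (p : {poly rat}) : {poly rat} :=
  \sum_(m < n.+1) p`_m *: ('X^m * Ep (n - m)).

Lemma PhiD n p q : Phi n (p + q) = Phi n p + Phi n q.
Proof. by rewrite /Phi -big_split; apply: eq_bigr => m _; rewrite coefD scalerDl. Qed.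
Lemma Phi0 n : Phi n 0 = 0.
Proof. by rewrite /Phi big1 // => m _; rewrite coef0 scale0r. Qed.
Lemma PhiZ n c p : Phi n (c *: p) = c *: Phi n p.
Proof. by rewrite /Phi scaler_sumr; apply: eq_bigr => m _; rewrite coefZ scalerA. Qed.
Lemma Phi_sum n I (r : seq I) (P : pred I) (F : I -> {poly rat}) :
  Phi n (\sum_(i <- r | P i) F i) = \sum_(i <- r | P i) Phi n (F i).
Proof. exact: (big_morph _ (PhiD n) (Phi0 n)). Qed.

Lemma PhiXn n m : (m <= n)%N -> Phi n 'X^m = 'X^m * Ep (n - m).
Proof.
move=> mn; rewrite /Phi (bigD1 (Ordinal (n:=n.+1) (m:=m) mn)) //= coefXn eqxx scale1r.
rewrite big1 ?addr0 // => i /negbTE h; rewrite coefXn.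
have -> : (i == m :> nat) = false by apply/negbTE; apply: contraFN h => /eqP e; apply/eqP/val_inj.
by rewrite scale0r.
Qed.

Lemma Phi1 n : Phi n 1 = Ep n.
Proof. have := @PhiXn n 0 (leq0n n); rewrite expr0 mul1r subn0 => ->; by []. Qed.

Lemma PhiX n p : Phi n.+1 ('X * p) = 'X * Phi n p.
Proof.
rewrite /Phi big_ord_recl coefXM /= scale0r add0r mulr_sumr.
apply: eq_bigr => i _; rewrite coefXM /= exprS -mulrA -scalerAr.
by rewrite /bump /= add1n subSS.
Qed.

Lemma Pexp n : (0 < n)%N -> Phi n (('X + 1) ^+ n) = ('X + 1) * Ep n.
Proof.
move=> n0; rewrite exprDn Phi_sum.
under eq_bigr => i _ do rewrite expr1n mulr1 -scaler_nat PhiZ PhiXn ?leq_subr // (subKn (ltn_ord i : (i <= n)%N)).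
rewrite big_ord_recr /= subnn expr0 mul1r binn scale1r.
by rewrite mulrDl mul1r PE.
Qed.

Fixpoint Cp (n k : nat) : {poly rat} :=
  match n with
  | 0 => 1
  | n'.+1 => 'X * \sum_(0 <= j < k) Cp n' j + \sum_(k <= j < n'.+1) Cp n' j
  end.

Lemma CpS n k : (k <= n)%N -> Cp n.+1 k.+1 = Cp n.+1 k + ('X - 1) * Cp n k.
Proof.
move=> kn /=; rewrite big_nat_recr //= (@big_ltn _ _ _ k n.+1) ?ltnS //.
ring.
Qed.

Lemma geo n : ('X + 1) ^+ n = 1 + 'X * \sum_(j < n) ('X + 1 : {poly rat}) ^+ j.
Proof.
elim: n => [|n IH]; first by rewrite big_ord0 mulr0 addr0 expr0.
rewrite big_ord_recr /= exprS mulrDl mul1r {2}IH; ring.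
Qed.

Lemma Ep0 : Ep 0 = 1.
Proof. apply/polyP => t; rewrite coef1 coefE; by case: t. Qed.

Lemma G n k : (k <= n)%N -> Cp n k \Po ('X + 1) = Phi n (('X + 1) ^+ k).
Proof.
elim: n k => [|n IH] k.
  rewrite leqn0 => /eqP -> /=; rewrite expr0 Phi1 rmorph1.
  by rewrite Ep0.
elim: k => [|k IHk] kn.
  rewrite /= big_geq // mulr0 add0r expr0 Phi1.
  rewrite rmorph_sum /= big_mkord.
  have H : \sum_(i < n.+1) (Cp n i \Po ('X + 1)) = \sum_(i < n.+1) Phi n (('X + 1) ^+ i).
    by apply: eq_bigr => i _; rewrite IH // -ltnS.
  rewrite H -Phi_sum; apply: (@mulfI _ 'X); first by rewrite polyX_eq0.
  have := Pexp (ltn0Sn n); rewrite geo PhiD Phi1 PhiX => E.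
  have : 'X * Ep n.+1 + Ep n.+1 = Ep n.+1 + 'X * Phi n (\sum_(j < n.+1) ('X + 1) ^+ j).
    by rewrite E; ring.
  move=> h; apply: (@addIr _ (Ep n.+1)); by rewrite h addrC.
rewrite CpS // rmorphD rmorphM /= IHk ?(ltnW kn) // IH //.
rewrite comp_polyB comp_polyX -polyC1 comp_polyC polyC1 addrK.
by rewrite -PhiX -PhiD exprS mulrDl mul1r addrC.
Qed.

Lemma coefCp n k t : (Cp n.+1 k)`_t =
  (if t == 0%N then 0 else \sum_(0 <= j < k) (Cp n j)`_t.-1) + \sum_(k <= j < n.+1) (Cp n j)`_t.
Proof. by rewrite /= coefD coefXM !coef_sum. Qed.

Lemma Cp_ge0 n k t : 0 <= (Cp n k)`_t.
Proof.
elim: n k t => [|n IH] k t; first by rewrite /= coef1; case: (t == 0%N).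
rewrite coefCp; apply: addr_ge0; last exact: sumr_ge0.
by case: (t == 0%N) => //; apply: sumr_ge0.
Qed.

Lemma Cp_size n k : (size (Cp n k) <= n.+1)%N.
Proof.
elim: n k => [|n IH] k; first by rewrite /= size_poly1.
apply/leq_sizeP => t ht; rewrite coefCp.
have Z : forall j u, (n.+1 <= u)%N -> (Cp n j)`_u = 0.
  by move=> j u hu; apply/(leq_sizeP _ _ (IH j)).
rewrite big1 ?addr0; last by move=> j _; apply: Z; lia.
case: eqP => // _; rewrite big1 // => j _; apply: Z; lia.
Qed.

Lemma sum_pos (r : seq nat) (F : nat -> rat) j0 :
  j0 \in r -> (forall j, 0 <= F j) -> 0 < F j0 -> 0 < \sum_(j <- r) F j.
Proof.
move=> jr h0 hp; rewrite (big_rem _ jr) /=.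
by apply: ltr_wpDr => //; apply: sumr_ge0.
Qed.

Lemma Cp00 n : 0 < (Cp n 0)`_0.
Proof.
elim: n => [|n IH]; first by rewrite /= coef1.
rewrite coefCp /= add0r; apply: (sum_pos (j0 := 0%N)); [by rewrite mem_index_iota | move=> j; exact: Cp_ge0 | exact: IH].
Qed.

Lemma Cpnn n : 0 < (Cp n n)`_n.
Proof.
elim: n => [|n IH]; first by rewrite /= coef1.
rewrite coefCp /= [X in _ + X]big_geq // addr0; apply: (sum_pos (j0 := n)); [by rewrite mem_index_iota; lia | move=> j; exact: Cp_ge0 | exact: IH].
Qed.

Lemma Cp_pos n k t : (k <= n)%N -> (0 < t)%N -> (t < n)%N -> 0 < (Cp n k)`_t.
Proof.
elim: n k t => [|n IH] k t; first by move=> _ _; rewrite ltn0.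
move=> kn t0 tn; rewrite coefCp.
have -> : (t == 0%N) = false by lia.
have S1 : 0 <= \sum_(0 <= j < k) (Cp n j)`_t.-1 by apply: sumr_ge0 => j _; apply: Cp_ge0.
have S2 : 0 <= \sum_(k <= j < n.+1) (Cp n j)`_t by apply: sumr_ge0 => j _; apply: Cp_ge0.
have P0 : 0 < (Cp n 0)`_t.-1.
  case: (t.-1 =P 0%N) => [->|h]; first exact: Cp00.
  apply: IH => //; lia.
case: (boolP ((0 < k)%N && ((t == n) || (k == n.+1)))) => [/andP [k0 _]|hc].
  apply: ltr_wpDr => //; apply: (sum_pos (j0 := 0%N)); [by rewrite mem_index_iota | move=> j; exact: Cp_ge0 | exact: P0].
apply: ltr_wpDl => //.
case: (boolP ((k == 0%N) && (t == n))) => [/andP [/eqP k0 /eqP tn']|hc2].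
  apply: (sum_pos (j0 := n)); first by rewrite mem_index_iota; lia.
    move=> j; exact: Cp_ge0.
  by rewrite tn'; apply: Cpnn.
apply: (sum_pos (j0 := k)); first by rewrite mem_index_iota; lia.
  move=> j; exact: Cp_ge0.
apply: IH => //; lia.
Qed.

Lemma Cp1 n k : (k <= n)%N -> (Cp n k).[1] = (n`!)%:R.
Proof.
elim: n k => [|n IH] k kn; first by rewrite /= hornerC.
rewrite /= hornerD hornerM hornerX mul1r !horner_sum.
rewrite (eq_big_nat _ _ (F2 := fun _ => (n`!)%:R)) => [|j /andP [_ hj]]; last by apply: IH; lia.
rewrite [X in _ + X](eq_big_nat _ _ (F2 := fun _ => (n`!)%:R)) => [|j /andP [_ hj]]; last by apply: IH; lia.
rewrite !sumr_const_nat -mulrnDr subn0 subnKC // factS natrM mulrC.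
by rewrite mulr_natr.
Qed.

Lemma fsh_oo a b : fsh a b = (oo b a)%:R.
Proof. by case: a => [|a]; case: b => [|b]; rewrite /= ?oo00 ?oo0S ?ooS0. Qed.

Lemma size_Ftail d n : size (Ftail d n) = n.+1.
Proof. by elim: n => [|n IH] //=; rewrite IH. Qed.

Lemma nth_Ftail d m n j : (n <= m)%N ->
  nth 0 (Ftail d m) (j + (m - n)) = nth 0 (Ftail d n) j.
Proof.
elim: m => [|m IH] nm; first by move: nm; rewrite leqn0 => /eqP ->; rewrite addn0.
case: (ltngtP n m.+1) nm => // [h|->] _; last by rewrite subnn addn0.
rewrite (_ : (j + (m.+1 - n) = (j + (m - n)).+1)%N); last lia.
by rewrite /= IH.
Qed.

Lemma Fsh_top d : Fsh d d.+1 = 1.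
Proof. by rewrite /Fsh; have := @nth_Ftail d d.+1 0 0 (leq0n _); rewrite add0n subn0 => ->. Qed.

Lemma Fsh_nth d n j : (n <= d.+1)%N ->
  nth 0 (Ftail d n) j = Fsh d (j + (d.+1 - n)).
Proof. by move=> h; rewrite /Fsh nth_Ftail. Qed.

Lemma Fsh_rec d a : (a < d.+1)%N ->
  Fsh d a = (((d.+1)`!)%:R - (a`!)%:R)^-1 *
     \sum_(k < d.+1 - a) (oo (a + k.+1) a)%:R * Fsh d (a + k.+1).
Proof.
move=> ad.
have En : (d.+1 - a = (d.+1 - a.+1).+1)%N by lia.
have -> : Fsh d a = nth 0 (Ftail d (d.+1 - a)) 0.
  by rewrite Fsh_nth ?leq_subr // add0n subKn // ltnW.
rewrite En /= size_Ftail.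
have Ea : (d.+1 - (d.+1 - a.+1).+1 = a)%N by lia.
rewrite Ea.
congr (_ * _); apply: eq_bigr => k _; rewrite fsh_oo; congr (_ * _).
rewrite Fsh_nth; last by lia.
congr (Fsh _ _); lia.
Qed.

Lemma fact_lt a D : (a < D)%N -> (1 < D)%N -> (a`! < D`!)%N.
Proof.
case: a => [|a] aD D1; last exact: ltn_fact.
by apply: leq_trans D1 (fact_geq D).
Qed.

Lemma eigFsh d a : (0 < d)%N -> (a <= d.+1)%N ->
  \sum_(b < d.+2) (oo b a)%:R * Fsh d b = ((d.+1)`!)%:R * Fsh d a.
Proof.
move=> d0 ad; case: (ltngtP a d.+1) ad => // [lt|->] _; last first.
  rewrite big_ord_recr /= oo_nn Fsh_top big1 ?add0r // => b _.
  by rewrite oo_lt ?mul0r.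
have ne : ((d.+1)`!)%:R - (a`!)%:R != 0 :> rat.
  rewrite subr_eq0 eqr_nat; apply/negP => /eqP h.
  by have := fact_lt lt d0; rewrite h ltnn.
rewrite -(big_mkord (fun _ => true) (fun b => (oo b a)%:R * Fsh d b)) (big_cat_nat _ (n := a.+1)) //=; last by lia.
rewrite big_nat_recr //= big1_seq ?add0r; last first.
  by move=> b; rewrite mem_index_iota => /andP [_ h]; rewrite oo_lt ?mul0r.
rewrite -{1}(add0n a.+1) big_addn big_mkord subSS.
have hF := Fsh_rec lt.
have -> : \sum_(i < d.+1 - a) (oo (i + a.+1) a)%:R * Fsh d (i + a.+1) =
   \sum_(k < d.+1 - a) (oo (a + k.+1) a)%:R * Fsh d (a + k.+1).
  by apply: eq_bigr => k _; rewrite (_ : (k + a.+1 = a + k.+1)%N) //; lia.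
move: hF; set T := \sum_(k < d.+1 - a) _ => hF.
have hT : T = (((d.+1)`!)%:R - (a`!)%:R) * Fsh d a.
  by rewrite hF mulrA divff // mul1r.
rewrite hT oo_nn; ring.
Qed.


Lemma coefFpoly d m : (Fpoly d)`_m = if (m <= d.+1)%N then Fsh d (d.+1 - m) else 0.
Proof.
rewrite /Fpoly coef_sum.
under eq_bigr do rewrite coefZ coefXn.
case: leqP => hm.
  have hlt : (d.+1 - m < d.+2)%N by lia.
  rewrite (bigD1 (Ordinal hlt)) //= subKn // eqxx mulr1 big1 ?addr0 // => i hi.
  have -> : (m == d.+1 - i)%N = false; last by rewrite mulr0.
  apply/negP => /eqP e; move/negP: hi; apply; apply/eqP/val_inj => /=.
  have := ltn_ord i; lia.
rewrite big1 // => i _.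
have -> : (m == d.+1 - i)%N = false; last by rewrite mulr0.
apply/negP => /eqP e; lia.
Qed.

Lemma coefPhi n p t : (Phi n p)`_t =
  if (t <= n)%N then \sum_(m < n.+1) p`_m * (oo (n - m) (n - t))%:R else 0.
Proof.
rewrite /Phi coef_sum; case: leqP => ht.
  apply: eq_bigr => m _; rewrite coefZ coefXnM coefE.
  case: ltnP => h1; first by rewrite oo_lt ?mulr0 //; have := ltn_ord m; lia.
  rewrite ifT; last by lia.
  congr (_ * (oo _ _)%:R); lia.
rewrite big1 // => m _; rewrite coefZ coefXnM coefE.
case: ltnP => h1; first by rewrite mulr0.
rewrite ifF ?mulr0 //; apply/negbTE; have := ltn_ord m; lia.
Qed.

Lemma eigF d : (0 < d)%N -> Phi d.+1 (Fpoly d) = ((d.+1)`!)%:R *: Fpoly d.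
Proof.
move=> d0; apply/polyP => t; rewrite coefPhi coefZ coefFpoly.
case: leqP => ht; last by rewrite mulr0.
under eq_bigr => m _ do rewrite coefFpoly leq_ord.
rewrite (reindex_inj rev_ord_inj) /=.
under eq_bigr => m _ do rewrite subSS subKn ?leq_ord // mulrC.
by rewrite eigFsh //; lia.
Qed.

Lemma Fpoly0 d : (Fpoly d)`_0 = 1.
Proof. by rewrite coefFpoly /= subn0 Fsh_top. Qed.

Lemma Fpoly_size d : (size (Fpoly d) <= d.+2)%N.
Proof. by apply/leq_sizeP => j hj; rewrite coefFpoly ifF //; apply/negbTE; lia. Qed.

Lemma eig_uniq d (q : {poly rat}) : (0 < d)%N -> (size q <= d.+2)%N ->
  Phi d.+1 q = ((d.+1)`!)%:R *: q -> q = q`_0 *: Fpoly d.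
Proof.
move=> d0 sq E.
set lam : rat := ((d.+1)`!)%:R.
have EF := eigF d0.
have key : forall t, (t <= d.+1)%N -> q`_t = q`_0 * (Fpoly d)`_t.
  elim/ltn_ind => t IH ht.
  case: (posnP t) => [->|tpos]; first by rewrite Fpoly0 mulr1.
  have Eq : (Phi d.+1 q)`_t = (lam *: q)`_t by rewrite E.
  have Ef : (Phi d.+1 (Fpoly d))`_t = (lam *: Fpoly d)`_t by rewrite EF.
  rewrite !coefPhi !coefZ ht in Eq Ef.
  rewrite (bigD1 (Ordinal (ht : (t < d.+2)%N))) // in Eq.
  rewrite (bigD1 (Ordinal (ht : (t < d.+2)%N))) // in Ef.
  move: Eq Ef => /=.
  have R : \sum_(i < d.+2 | i != Ordinal (ht : (t < d.+2)%N)) q`_i * (oo (d.+1 - i) (d.+1 - t))%:R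
    = q`_0 * \sum_(i < d.+2 | i != Ordinal (ht : (t < d.+2)%N)) (Fpoly d)`_i * (oo (d.+1 - i) (d.+1 - t))%:R.
    rewrite mulr_sumr; apply: eq_bigr => i hi.
    case: (ltngtP i t) => hit.
    - by rewrite IH ?mulrA //; lia.
    - by rewrite oo_lt ?mulr0 //; have := ltn_ord i; lia.
    - by move/negP: hi; case; apply/eqP/val_inj.
  rewrite R oo_nn.
  set o : rat := ((d.+1 - t)`!)%:R; set Rf := \sum_(i < _ | _) _.
  move=> Eq Ef.
  have ne : lam - o != 0.
    rewrite subr_eq0 eqr_nat; apply/negP => /eqP h.
    have := @fact_lt (d.+1 - t) d.+1 ltac:(lia) ltac:(lia); rewrite h ltnn //.
  apply: (mulfI ne).
  have e1 : (lam - o) * q`_t = q`_0 * Rf by rewrite mulrBl -Eq; ring.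
  have e2 : (lam - o) * (Fpoly d)`_t = Rf by rewrite mulrBl -Ef; ring.
  by rewrite e1 mulrCA e2.
apply/polyP => t; rewrite coefZ.
case: (leqP t d.+1) => ht; first exact: key.
rewrite coefFpoly ifF ?mulr0; last by apply/negbTE; lia.
by apply/(leq_sizeP _ _ sq); lia.
Qed.

Lemma poly_expand (p : {poly rat}) n : (size p <= n)%N ->
  p = \sum_(i < n) p`_i *: 'X^i.
Proof.
move=> sp; rewrite -poly_def; apply/polyP => j; rewrite coef_poly.
case: ltnP => // h; by apply/(leq_sizeP _ _ sp).
Qed.

Lemma size_compm (p : {poly rat}) : size (p \Po ('X - 1)) = size p.
Proof. by rewrite size_comp_poly2 // -polyC1 size_XsubC. Qed.
Lemma size_compp (p : {poly rat}) : size (p \Po ('X + 1)) = size p.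
Proof. by rewrite size_comp_poly2 // -polyC1 size_XaddC. Qed.

Lemma compK1 (p : {poly rat}) : (p \Po ('X - 1)) \Po ('X + 1) = p.
Proof.
have := comp_polyXaddC_K p (-1); by rewrite polyCN opprK polyC1.
Qed.
Lemma compK2 (p : {poly rat}) : (p \Po ('X + 1)) \Po ('X - 1) = p.
Proof.
have := comp_polyXaddC_K p 1; by rewrite polyC1.
Qed.

Definition Psi n (p : {poly rat}) := \sum_(k < n.+1) p`_k *: Cp n k.

Lemma coefPsi n p i : (Psi n p)`_i = \sum_(k < n.+1) p`_k * (Cp n k)`_i.
Proof. by rewrite /Psi coef_sum; apply: eq_bigr => k _; rewrite coefZ. Qed.

Lemma K n (q : {poly rat}) : (size q <= n.+1)%N -> (Phi n q) \Po ('X - 1) = Psi n (q \Po ('X - 1)).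
Proof.
move=> sq.
set r := q \Po ('X - 1).
have sr : (size r <= n.+1)%N by rewrite size_compm.
have -> : q = r \Po ('X + 1) by rewrite compK1.
rewrite {1}(poly_expand sr) [X in Phi n X]rmorph_sum Phi_sum rmorph_sum /Psi.
apply: eq_bigr => k _.
rewrite /= comp_polyZ PhiZ comp_polyZ rmorphXn /= comp_polyX -G ?compK2 //.
by rewrite -ltnS.
Qed.

Lemma Psi_size n (p : {poly rat}) : (size (Psi n p) <= n.+1)%N.
Proof.
apply/leq_sizeP => j hj; rewrite coefPsi big1 // => k _.
by rewrite (leq_sizeP _ _ (Cp_size n k)) ?mulr0.
Qed.

Unset Implicit Arguments. Set Strict Implicit.
Theorem lemma2p12 (d i : nat) :
  (1 <= d)%N -> (1 <= i <= d)%N -> 0 < Hcoef i d.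
Proof.
move=> d1 /andP [i1 id].
set lam : rat := ((d.+1)`!)%:R.
have lam0 : 0 < lam by rewrite ltr0n fact_gt0.
set h := Hpoly d.
have hs : (size h <= d.+2)%N by rewrite /h /Hpoly size_compm Fpoly_size.
have E1 : Psi d.+1 h = lam *: h.
  by rewrite /h /Hpoly -K ?Fpoly_size // eigF // comp_polyZ.
have hsum : \sum_(k < d.+2) h`_k = 1.
  have : h.[1] = 1.
    by rewrite /h /Hpoly horner_comp hornerD hornerN hornerX hornerC subrr horner_coef0 Fpoly0.
  rewrite (horner_coef_wide _ hs) => <-; apply: eq_bigr => k _; by rewrite expr1n mulr1.
have Eco : forall t, \sum_(k < d.+2) h`_k * (Cp d.+1 k)`_t = lam * h`_t.
  by move=> t; rewrite -coefPsi E1 coefZ.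
set g := \poly_(t < d.+2) `|h`_t|.
have gk : forall k, (k < d.+2)%N -> g`_k = `|h`_k| by move=> k hk; rewrite coef_poly hk.
have gs : (size g <= d.+2)%N by apply: size_poly.
have ineq : forall t, (t < d.+2)%N -> lam * g`_t <= (Psi d.+1 g)`_t.
  move=> t ht; rewrite gk // coefPsi -[lam](ger0_norm (ltW lam0)) -normrM -Eco.
  apply: (le_trans (ler_norm_sum _ _ _)); apply: ler_sum => k _.
  by rewrite normrM (ger0_norm (Cp_ge0 _ _ _)) gk.
have total : \sum_(t < d.+2) (Psi d.+1 g)`_t = \sum_(t < d.+2) lam * g`_t.
  have := horner_coef_wide 1 (Psi_size d.+1 g).
  under eq_bigr do rewrite expr1n mulr1.
  move=> <-; rewrite /Psi horner_sum -mulr_sumr.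
  under eq_bigr => k _ do rewrite hornerZ (Cp1 (leq_ord k)) mulrC.
  by rewrite -mulr_sumr.
have eqPsi : Psi d.+1 g = lam *: g.
  have Z := @psumr_eq0P _ _ xpredT (fun t : 'I_d.+2 => (Psi d.+1 g)`_t - lam * g`_t).
  have {}Z : forall t : 'I_d.+2, (Psi d.+1 g)`_t - lam * g`_t = 0.
    move=> t; apply: Z => //; first by move=> u _; rewrite subr_ge0; apply: ineq.
    by rewrite sumrB total subrr.
  apply/polyP => t; rewrite coefZ.
  case: (ltnP t d.+2) => ht.
    by apply/eqP; rewrite -subr_eq0; apply/eqP; apply: (Z (Ordinal ht)).
  by rewrite (leq_sizeP _ _ (Psi_size d.+1 g)) // (leq_sizeP _ _ gs) // mulr0.
set qq := g \Po ('X + 1).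
have qs : (size qq <= d.+2)%N by rewrite size_compp.
have eqq : Phi d.+1 qq = lam *: qq.
  have := K qs; rewrite compK2 eqPsi => e.
  by rewrite -[LHS]compK1 e comp_polyZ.
have qF := eig_uniq d1 qs eqq.
set c := qq`_0.
have gc : g = c *: h by rewrite -[g]compK2 -/qq {1}qF comp_polyZ.
have c0 : 0 <= c.
  rewrite /c -horner_coef0 horner_comp hornerD hornerX hornerC add0r.
  rewrite (horner_coef_wide _ gs); apply: sumr_ge0 => k _.
  by rewrite expr1n mulr1 gk // normr_ge0.
have hge : forall k, (k < d.+2)%N -> 0 <= h`_k.
  move=> k hk; rewrite leNgt; apply/negP => hneg.
  have e : `|h`_k| = c * h`_k by rewrite -gk // gc coefZ.
  have : `|h`_k| <= 0 by rewrite e; apply: mulr_ge0_le0 c0 (ltW hneg).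
  rewrite normr_le0 => /eqP e0; by rewrite e0 ltxx in hneg.
rewrite /Hcoef -/h.
set t := (d.+1 - i)%N.
have tpos : (0 < t)%N by rewrite /t; lia.
have tlt : (t < d.+1)%N by rewrite /t; lia.
have NN : forall k : 'I_d.+2, true -> 0 <= h`_k * (Cp d.+1 k)`_t.
  by move=> k _; apply: mulr_ge0; [apply: hge | apply: Cp_ge0].
rewrite -(pmulr_rgt0 _ lam0) -Eco lt0r; apply/andP; split; last first.
  by apply: sumr_ge0.
apply/eqP => S0.
have H := psumr_eq0P NN S0.
have : \sum_(k < d.+2) h`_k = 0.
  apply: big1 => k _.
  have := H k isT; rewrite ?mulf_eq0 => /eqP; rewrite mulf_eq0 => /orP [/eqP //|].
  by move/eqP => c0'; have := Cp_pos (leq_ord k) tpos tlt; rewrite c0' ltxx.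
by rewrite hsum => /eqP; rewrite oner_eq0.
Qed.
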